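(* In the setting of the context, let $K=(K_c,K_h)$ and $r$ be formal power series as produced in the setting (so $K_c(x,y)=(x,y)+$ terms of order $\ge2$, $K_h$ has only terms of order $\ge2$, and $DK\,r=F\circ K$ formally). Let $\mathcal E(\mathbf x)=E(\mathcal C\mathbf x+L_c)$ and $\mathcal E_0=\mathcal E(0)=E(L_c)$. If the constant $$\mathscr E=\Omega_{xxx}\Omega_{yy}^3-3\Omega_{xxy}\Omega_{yy}^2\Omega_{xy}+3\Omega_{xyy}\Omega_{yy}\Omega_{xy}^2-\Omega_{yyy}\Omega_{xy}^3$$ is non-zero, then there exists a formal power series $h:\mathbb R\to\mathbb R^2$ of the form $$h(t)=\Big(\sum_{n\ge2}c_nt^n,\;t^3\Big)$$ such that $\mathcal E(K(h(t)))-\mathcal E_0=0$ as a formal power series in $t$.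
   Context: Circular restricted four body problem (CRFBP): masses $m_1+m_2+m_3=1$, $0<m_3\le m_2\le m_1$, primaries at fixed positions $(x_j,y_j)$, $j=1,2,3$, $r_j(x,y)=\sqrt{(x-x_j)^2+(y-y_j)^2}$, $\Omega(x,y)=\tfrac12(x^2+y^2)+\sum_j m_j/r_j$, vector field $f(x,\dot x,y,\dot y)=(\dot x,\,2\dot y+\Omega_x,\,\dot y,\,-2\dot x+\Omega_y)$, and Jacobi integral $E(x,\dot x,y,\dot y)=-(\dot x^2+\dot y^2)+2\Omega(x,y)$, which is conserved by $f$. Let $L_c=(x_0,0,y_0,0)$ be a critical libration point: $\Omega_x=\Omega_y=0$ and $\Omega_{xx}\Omega_{yy}=\Omega_{xy}^2$ at $(x_0,y_0)$; as in the paper's setting assume also $\Omega_{yy}\ne0$ and $\Omega_{xx}+\Omega_{yy}>4$ (all derivatives of $\Omega$ evaluated at $(x_0,y_0)$). Set $\lambda_\pm=\mp\sqrt{-4+\Omega_{xx}+\Omega_{yy}}$, $\mathbf v_0=(\Omega_{yy},0,-\Omega_{xy},0)$, $\mathbf v_1=(\Omega_{xy},\Omega_{yy},2-\Omega_{xx},-\Omega_{xy})$, $\mathbf v_\pm=(\Omega_{xy}+2\lambda_\pm,\lambda_\pm(\Omega_{xy}+2\lambda_\pm),\Omega_{yy}-4,\lambda_\pm(\Omega_{yy}-4))$, $\mathcal C$ the matrix with columns $\mathbf v_0,\mathbf v_1,\mathbf v_+,\mathbf v_-$, and $F(\mathbf x)=\mathcal C^{-1}f(\mathcal C\mathbf x+L_c)$.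 The formal series $K:\mathbb R^2\to\mathbb R^4$, $r:\mathbb R^2\to\mathbb R^2$ satisfy $DK(\mathbf y)r(\mathbf y)=F(K(\mathbf y))$ order by order, with $r(x,y)=(y,0)+$ terms of order $\ge2$. All compositions are of formal power series (with $\mathcal E$ replaced by its Taylor series at $0$). *)

(* Defs.v *)
From Stdlib Require Import Reals Arith Factorial.
From Coquelicot Require Import Coquelicot.
Open Scope R_scope.

(* univariate formal power series in t: coefficient of t^n *)
Definition ps := nat -> R.
(* bivariate formal power series in (x,y): coefficient of x^n y^m *)
Definition bps := nat -> nat -> R.

Definition ps_add (a b : ps) : ps := fun n => a n + b n.
Definition ps_scal (c : R) (a : ps) : ps := fun n => c * a n.
Definition ps_mul (a b : ps) : ps :=
  fun n => sum_f_R0 (fun i => a i * b (n - i)%nat) n.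
Definition ps_one : ps := fun n => if Nat.eqb n 0 then 1 else 0.
Fixpoint ps_pow (a : ps) (k : nat) : ps :=
  match k with O => ps_one | S k' => ps_mul a (ps_pow a k') end.

Definition bps_zero : bps := fun _ _ => 0.
Definition bps_add (A B : bps) : bps := fun n m => A n m + B n m.
Definition bps_scal (c : R) (A : bps) : bps := fun n m => c * A n m.
Definition bps_mul (A B : bps) : bps :=
  fun n m => sum_f_R0 (fun i => sum_f_R0 (fun j =>
                 A i j * B (n - i)%nat (m - j)%nat) m) n.
Definition bps_one : bps :=
  fun n m => if andb (Nat.eqb n 0) (Nat.eqb m 0) then 1 else 0.
Fixpoint bps_pow (A : bps) (k : nat) : bps :=
  match k with O => bps_one | S k' => bps_mul A (bps_pow A k') end.

Definition bps_dx (A : bps) : bps := fun n m => INR (S n) * A (S n) m.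
Definition bps_dy (A : bps) : bps := fun n m => INR (S m) * A n (S m).

(* Formal composition A(p(t), q(t)) of a bivariate series with two
   univariate series without constant term (p 0 = q 0 = 0): only the
   monomials of total degree <= N contribute to the coefficient of t^N. *)
Definition comp_ps (A : bps) (p q : ps) : ps := fun N =>
  sum_f_R0 (fun i => sum_f_R0 (fun j =>
     A i j * ps_mul (ps_pow p i) (ps_pow q j) N) (N - i)) N.

(* Formal composition A(P(x,y), Q(x,y)) with P, Q without constant term. *)
Definition comp_bps (A : bps) (P Q : bps) : bps := fun n m =>
  sum_f_R0 (fun i => sum_f_R0 (fun j =>
     A i j * bps_mul (bps_pow P i) (bps_pow Q j) n m) (n + m - i)) (n + m).

Definition pd (g : R -> R -> R) (i j : nat) (a b : R) : R :=
  Derive_n (fun x => Derive_n (fun y => g x y) j b) i a.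

(* Taylor series of g at (a,b), in the displacement variables (x-a, y-b) *)
Definition taylor2 (g : R -> R -> R) (a b : R) : bps :=
  fun i j => pd g i j a b / (INR (fact i) * INR (fact j)).

Definition Omega (m1 m2 m3 x1 y1 x2 y2 x3 y3 : R) (x y : R) : R :=
  / 2 * (x ^ 2 + y ^ 2)
  + m1 / sqrt ((x - x1) ^ 2 + (y - y1) ^ 2)
  + m2 / sqrt ((x - x2) ^ 2 + (y - y2) ^ 2)
  + m3 / sqrt ((x - x3) ^ 2 + (y - y3) ^ 2).

Definition dxfun (g : R -> R -> R) : R -> R -> R := fun x y => pd g 1 0 x y.
Definition dyfun (g : R -> R -> R) : R -> R -> R := fun x y => pd g 0 1 x y.

(* The 4x4 matrix C (entry C i j: row i = component (x, xdot, y, ydot),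
   column j = vector v0, v1, v+, v-), built from Oxx = Omega_xx etc. *)
Definition Cmat (Oxx Oxy Oyy : R) : nat -> nat -> R := fun i j =>
  let lp := - sqrt (-4 + Oxx + Oyy) in
  let lm := sqrt (-4 + Oxx + Oyy) in
  match j, i with
  | 0, 0 => Oyy | 0, 1 => 0 | 0, 2 => - Oxy | 0, 3 => 0
  | 1, 0 => Oxy | 1, 1 => Oyy | 1, 2 => 2 - Oxx | 1, 3 => - Oxy
  | 2, 0 => Oxy + 2 * lp | 2, 1 => lp * (Oxy + 2 * lp)
  | 2, 2 => Oyy - 4 | 2, 3 => lp * (Oyy - 4)
  | 3, 0 => Oxy + 2 * lm | 3, 1 => lm * (Oxy + 2 * lm)
  | 3, 2 => Oyy - 4 | 3, 3 => lm * (Oyy - 4)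
  | _, _ => 0
  end.

Definition mv_bps (M : nat -> nat -> R) (V : nat -> bps) : nat -> bps :=
  fun i n m => sum_f_R0 (fun j => M i j * V j n m) 3.
Definition mv_ps (M : nat -> nat -> R) (V : nat -> ps) : nat -> ps :=
  fun i n => sum_f_R0 (fun j => M i j * V j n) 3.

(* Formal f(L_c + W), where W = (W0,W1,W2,W3) are series without constant
   term (the displacement from L_c = (x0,0,y0,0)); Tx, Ty are the Taylor
   series of Omega_x, Omega_y at (x0,y0). *)
Definition f_formal (Tx Ty : bps) (W : nat -> bps) : nat -> bps := fun i =>
  match i with
  | 0 => W 1%nat
  | 1 => bps_add (bps_scal 2 (W 3%nat)) (comp_bps Tx (W 0%nat) (W 2%nat))
  | 2 => W 3%nat
  | 3 => bps_add (bps_scal (-2) (W 1%nat)) (comp_bps Ty (W 0%nat) (W 2%nat))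
  | _ => bps_zero
  end.

(* Formal E(L_c + V) - E(L_c), with E = -(xdot^2+ydot^2) + 2 Omega(x,y),
   V univariate series without constant term, TO the Taylor series of
   Omega at (x0,y0) and Om0 = Omega(x0,y0). *)
Definition energy_formal (TO : bps) (Om0 : R) (V : nat -> ps) : ps :=
  fun n =>
    - (ps_mul (V 1%nat) (V 1%nat) n + ps_mul (V 3%nat) (V 3%nat) n)
    + 2 * comp_ps TO (V 0%nat) (V 2%nat) n
    - (if Nat.eqb n 0 then 2 * Om0 else 0).

(* Main.v *)
Require Import Defs.
From Stdlib Require Import Reals Lia Lra Arith.
From Coquelicot Require Import Coquelicot.
Open Scope R_scope.

Lemma sum_zero (f : nat -> R) N : (forall i, (i <= N)%nat -> f i = 0) -> sum_f_R0 f N = 0.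
Proof.
  induction N; intros H; simpl. apply H; lia.
  rewrite IHN. rewrite (H (S N)) by lia. ring. intros; apply H; lia.
Qed.

Lemma sum_trunc f k N : (k <= N)%nat -> (forall i, (k < i)%nat -> (i <= N)%nat -> f i = 0) ->
  sum_f_R0 f N = sum_f_R0 f k.
Proof.
  intros Hk H. induction N.
  - assert (k=0)%nat by lia; subst; reflexivity.
  - destruct (Nat.eq_dec k (S N)). subst; reflexivity.
    simpl. rewrite IHN by (lia || (intros; apply H; lia)). rewrite (H (S N)) by lia. ring.
Qed.

Lemma sum_shift f k m : (forall i, (i < k)%nat -> f i = 0) ->
  sum_f_R0 f (k + m) = sum_f_R0 (fun j => f (k + j)%nat) m.
Proof.
  intros H. induction m.
  - simpl. rewrite Nat.add_0_r. destruct k. reflexivity. simpl.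
    rewrite sum_zero by (intros; apply H; lia). ring.
  - rewrite Nat.add_succ_r. simpl. rewrite IHm. rewrite Nat.add_succ_r. reflexivity.
Qed.

Definition ordge (a : ps) (k : nat) := forall i, (i < k)%nat -> a i = 0.
Definition psub (a b : ps) : ps := fun i => a i - b i.
Definition padd (a b : ps) : ps := fun i => a i + b i.

Lemma mul_window a b k l m : ordge a k -> ordge b l ->
  ps_mul a b (k + l + m)%nat = sum_f_R0 (fun i => a (k+i)%nat * b (l + m - i)%nat) m.
Proof.
  intros Ha Hb. unfold ps_mul.
  rewrite (sum_trunc _ (k+m)); [| lia | intros i Hi1 Hi2; rewrite Hb by lia; ring].
  rewrite sum_shift by (intros; rewrite Ha by lia; ring).
  apply sum_eq. intros i Hi. f_equal. f_equal. lia.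
Qed.

Lemma mul_ord a b u v : ordge a u -> ordge b v -> ordge (ps_mul a b) (u+v)%nat.
Proof.
  intros Ha Hb i Hi. unfold ps_mul. apply sum_zero. intros j Hj.
  destruct (Nat.lt_ge_cases j u). rewrite Ha by auto; ring. rewrite Hb by lia; ring.
Qed.

Lemma mul_lead a b u v : ordge a u -> ordge b v -> ps_mul a b (u+v)%nat = a u * b v.
Proof.
  intros. replace (u+v)%nat with (u+v+0)%nat by lia. rewrite mul_window by auto. simpl.
  rewrite Nat.add_0_r. replace (v+0-0)%nat with v by lia. reflexivity.
Qed.

Lemma mul_win3 a b k l : ordge a k -> ordge b l ->
  ps_mul a b (k + l + 2)%nat = a k * b (l+2)%nat + a (k+1)%nat * b (l+1)%nat + a (k+2)%nat * b l.
Proof.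
  intros. rewrite mul_window by auto. simpl. rewrite Nat.add_0_r.
  replace (l+2-0)%nat with (l+2)%nat by lia. replace (l+2-1)%nat with (l+1)%nat by lia.
  replace (l+2-2)%nat with l by lia. reflexivity.
Qed.

Lemma mul_one_r a n : ps_mul a ps_one n = a n.
Proof.
  unfold ps_mul. destruct n.
  - simpl. unfold ps_one. simpl. rewrite Rmult_1_r. reflexivity.
  - rewrite tech5. rewrite sum_zero. rewrite Nat.sub_diag; unfold ps_one; simpl. ring.
    intros i Hi. unfold ps_one. match goal with |- context[if ?c then _ else _] => destruct c eqn:E end.
    apply Nat.eqb_eq in E. lia. ring.
Qed.

Lemma mul_one_l a n : ps_mul ps_one a n = a n.
Proof.
  unfold ps_mul. rewrite (sum_trunc _ 0); [|lia|].
  simpl. unfold ps_one. simpl. rewrite Nat.sub_0_r. ring.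
  intros i Hi _. unfold ps_one. match goal with |- context[if ?c then _ else _] => destruct c eqn:E end.
    apply Nat.eqb_eq in E; lia. ring.
Qed.

Lemma mul_ext a a' b b' n : (forall i, a i = a' i) -> (forall i, b i = b' i) ->
  ps_mul a b n = ps_mul a' b' n.
Proof. intros. unfold ps_mul. apply sum_eq. intros. rewrite H, H0. reflexivity. Qed.

Lemma mul_sub A B A' B' n :
  ps_mul A B n - ps_mul A' B' n = ps_mul (psub A A') B n + ps_mul A' (psub B B') n.
Proof.
  unfold ps_mul, psub. rewrite <- minus_sum, <- sum_plus. apply sum_eq. intros; ring.
Qed.

Lemma mul_symsub A B A' B' n :
  2 * (ps_mul A B n - ps_mul A' B' n) =
  ps_mul (psub A A') (padd B B') n + ps_mul (padd A A') (psub B B') n.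
Proof.
  unfold ps_mul, psub, padd. rewrite <- minus_sum, <- sum_plus, scal_sum. apply sum_eq. intros; ring.
Qed.

Lemma ord_one : ordge ps_one 0.
Proof. intros i Hi; lia. Qed.

Lemma pow_ord a u k : ordge a u -> ordge (ps_pow a k) (k*u)%nat.
Proof.
  intros Ha. induction k. apply ord_one. simpl. apply mul_ord; auto.
Qed.

Lemma pow_lead a u k : ordge a u -> ps_pow a k (k*u)%nat = (a u)^k.
Proof.
  intros Ha. induction k. reflexivity.
  change (ps_mul a (ps_pow a k) (u + k*u)%nat = a u * a u ^ k).
  rewrite mul_lead. rewrite IHk. reflexivity. auto. apply pow_ord; auto.
Qed.

Lemma ordge_weak a k k' : ordge a k -> (k' <= k)%nat -> ordge a k'.
Proof. intros H Hk i Hi. apply H; lia. Qed.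

Lemma pm_ord p q u v a b : ordge p u -> ordge q v ->
  ordge (ps_mul (ps_pow p a) (ps_pow q b)) (a*u + b*v)%nat.
Proof. intros. apply mul_ord; apply pow_ord; auto. Qed.

Lemma pm_lead p q u v a b : ordge p u -> ordge q v ->
  ps_mul (ps_pow p a) (ps_pow q b) (a*u + b*v)%nat = (p u)^a * (q v)^b.
Proof. intros. rewrite mul_lead by (apply pow_ord; auto). rewrite !pow_lead by auto. reflexivity. Qed.

Lemma pm00 p q n : ps_mul (ps_pow p 0) (ps_pow q 0) n = ps_one n.
Proof. apply mul_one_r. Qed.
Lemma pm10 p q n : ps_mul (ps_pow p 1) (ps_pow q 0) n = p n.
Proof. simpl. rewrite mul_one_r. apply mul_one_r. Qed.
Lemma pm01 p q n : ps_mul (ps_pow p 0) (ps_pow q 1) n = q n.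
Proof. simpl. rewrite mul_one_l. apply mul_one_r. Qed.
Lemma pm20 p q n : ps_mul (ps_pow p 2) (ps_pow q 0) n = ps_mul p p n.
Proof. simpl. rewrite mul_one_r. apply mul_ext; intros; auto. apply mul_one_r. Qed.
Lemma pm11 p q n : ps_mul (ps_pow p 1) (ps_pow q 1) n = ps_mul p q n.
Proof. simpl. apply mul_ext; intros; apply mul_one_r. Qed.
Lemma pm02 p q n : ps_mul (ps_pow p 0) (ps_pow q 2) n = ps_mul q q n.
Proof. simpl. rewrite mul_one_l. apply mul_ext; intros; auto. apply mul_one_r. Qed.

Lemma pow_diff X X' d : ordge X 2 -> ordge X' 2 -> ordge (psub X X') (d+2)%nat -> X 2%nat = X' 2%nat ->
  forall a, ordge (psub (ps_pow X a) (ps_pow X' a)) (d + 2*a)%nat /\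
    psub (ps_pow X a) (ps_pow X' a) (d + 2*a)%nat = INR a * (X 2%nat)^(a-1) * psub X X' (d+2)%nat.
Proof.
  intros HX HX' HD H2 a. induction a as [|a [IHo IHv]].
  - split. intros i _. unfold psub; simpl; ring. unfold psub; simpl; ring.
  - assert (E : forall i, psub (ps_pow X (S a)) (ps_pow X' (S a)) i =
       ps_mul (psub X X') (ps_pow X a) i + ps_mul X' (psub (ps_pow X a) (ps_pow X' a)) i).
    { intros i. unfold psub at 1. simpl. apply mul_sub. }
    split.
    + intros i Hi. rewrite E.
      rewrite (mul_ord _ _ (d+2) (a*2)); [| auto | apply pow_ord; auto | lia].
      rewrite (mul_ord _ _ 2 (d+2*a)); [ring | auto | auto | lia].
    + rewrite E.
      replace (d + 2 * S a)%nat with (d + 2 + a*2)%nat at 1 by lia.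
      rewrite mul_lead; [| auto | apply pow_ord; auto].
      replace (d + 2 * S a)%nat with (2 + (d + 2*a))%nat by lia.
      rewrite mul_lead; [| auto | auto].
      rewrite IHv, pow_lead by auto. rewrite <- H2.
      destruct a. simpl. ring. replace (S (S a) - 1)%nat with (S a) by lia.
      replace (S a - 1)%nat with a by lia. rewrite (S_INR (S a)). simpl. ring.
Qed.

Definition dsum (G : nat -> nat -> R) N :=
  sum_f_R0 (fun i => sum_f_R0 (fun j => G i j) (N - i)) N.

Lemma dsum_succ G N : (forall i j, (N < i + j)%nat -> G i j = 0) -> dsum G (S N) = dsum G N.
Proof.
  intros H. unfold dsum. rewrite tech5. rewrite Nat.sub_diag.
  replace (sum_f_R0 (fun j => G (S N) j) 0) with (G (S N) 0%nat) by reflexivity.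
  rewrite (H (S N) 0%nat) by lia. rewrite Rplus_0_r.
  apply sum_eq. intros i Hi. replace (S N - i)%nat with (S (N - i)) by lia.
  rewrite tech5. rewrite H by lia. ring.
Qed.

Lemma dsum_stable G K : (forall i j, (K < i + j)%nat -> G i j = 0) ->
  forall N, (K <= N)%nat -> dsum G N = dsum G K.
Proof.
  intros H N HN. induction N.
  - assert (K = 0)%nat by lia. subst. reflexivity.
  - destruct (Nat.eq_dec K (S N)). subst; reflexivity.
    rewrite dsum_succ. apply IHN; lia. intros; apply H; lia.
Qed.

Lemma dsum_sub G G' N : dsum G N - dsum G' N = dsum (fun i j => G i j - G' i j) N.
Proof.
  unfold dsum. rewrite <- minus_sum. apply sum_eq. intros. rewrite minus_sum. reflexivity.
Qed.

Lemma dsum_ext G G' N : (forall i j, G i j = G' i j) -> dsum G N = dsum G' N.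
Proof. intros H. unfold dsum. apply sum_eq; intros; apply sum_eq; intros; apply H. Qed.

Lemma comp_split G N : (forall i j, (3 < i + j)%nat -> G i j = 0) ->
  (forall i j, (N < i + j)%nat -> G i j = 0) ->
  dsum G N = G 0%nat 0%nat + G 0%nat 1%nat + G 0%nat 2%nat + G 0%nat 3%nat + G 1%nat 0%nat + G 1%nat 1%nat + G 1%nat 2%nat + G 2%nat 0%nat + G 2%nat 1%nat + G 3%nat 0%nat.
Proof.
  intros H1 H2. destruct (le_lt_dec 3 N).
  - rewrite (dsum_stable G 3) by auto. unfold dsum; simpl; ring.
  - rewrite <- (dsum_stable G N H2 3) by lia. unfold dsum; simpl; ring.
Qed.

Lemma dsum1 G N : (forall i j, (1 < i + j)%nat -> G i j = 0) ->
  (forall i j, (N < i + j)%nat -> G i j = 0) ->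
  dsum G N = G 0%nat 0%nat + G 0%nat 1%nat + G 1%nat 0%nat.
Proof.
  intros H1 H2. destruct (le_lt_dec 1 N).
  - rewrite (dsum_stable G 1) by auto. unfold dsum; simpl; ring.
  - rewrite <- (dsum_stable G N H2 1) by lia. unfold dsum; simpl; ring.
Qed.

Lemma comp_dsum A p q N :
  comp_ps A p q N = dsum (fun i j => A i j * ps_mul (ps_pow p i) (ps_pow q j) N) N.
Proof. reflexivity. Qed.

Lemma mul_sub_l A A' B n : ps_mul A B n - ps_mul A' B n = ps_mul (psub A A') B n.
Proof. unfold ps_mul, psub. rewrite <- minus_sum. apply sum_eq. intros; ring. Qed.

Definition qq : ps := fun n => if Nat.eqb n 3 then 1 else 0.

Lemma qq_ord : ordge qq 3.
Proof. intros i Hi. unfold qq. destruct i as [|[|[|]]]; simpl; auto; lia. Qed.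

Lemma Kh_val A h M : ordge h 2 -> (M <= 3)%nat ->
  comp_ps A h qq M = A 0%nat 0%nat * ps_one M + A 1%nat 0%nat * h M + A 0%nat 1%nat * qq M.
Proof.
  intros Hh HM. rewrite comp_dsum. rewrite dsum1.
  - rewrite pm00, pm10, pm01. ring.
  - intros i j Hij. rewrite (pm_ord h qq 2 3 i j Hh qq_ord). ring. lia.
  - intros i j Hij. rewrite (pm_ord h qq 2 3 i j Hh qq_ord). ring. lia.
Qed.

Lemma Kh_diff A h h' d M : ordge h 2 -> ordge h' 2 -> h 2%nat = h' 2%nat ->
  ordge (psub h h') (d+2)%nat -> (M < d + 4)%nat ->
  comp_ps A h qq M - comp_ps A h' qq M = A 1%nat 0%nat * (h M - h' M).
Proof.
  intros Hh Hh' H2 Hd HM. rewrite !comp_dsum, dsum_sub.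
  assert (Z : forall i j, (i = 0 \/ 1 < i + j \/ M < i + j)%nat ->
     A i j * ps_mul (ps_pow h i) (ps_pow qq j) M - A i j * ps_mul (ps_pow h' i) (ps_pow qq j) M = 0).
  { intros i j Hij. destruct i.
    - change (ps_pow h 0) with ps_one. change (ps_pow h' 0) with ps_one. ring.
    - rewrite <- Rmult_minus_distr_l, mul_sub_l.
      destruct (pow_diff h h' d Hh Hh' Hd H2 (S i)) as [Ho _].
      rewrite (mul_ord _ _ (d + 2 * S i) (j*3) Ho (pow_ord _ _ _ qq_ord)). ring. clear -Hij HM. lia. }
  rewrite dsum1; [| intros; apply Z; lia | intros; apply Z; lia].
  rewrite (Z 0%nat 0%nat), (Z 0%nat 1%nat) by lia.
  rewrite !pm10. ring.
Qed.

Lemma pm_diff X Y X' Y' d : ordge X 2 -> ordge X' 2 -> ordge Y 2 -> ordge Y' 2 ->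
  X 2%nat = X' 2%nat -> Y 2%nat = Y' 2%nat ->
  ordge (psub X X') (d+2)%nat -> ordge (psub Y Y') (d+2)%nat ->
  forall a b,
  ordge (psub (ps_mul (ps_pow X a) (ps_pow Y b)) (ps_mul (ps_pow X' a) (ps_pow Y' b))) (d + 2*a + 2*b)%nat /\
  psub (ps_mul (ps_pow X a) (ps_pow Y b)) (ps_mul (ps_pow X' a) (ps_pow Y' b)) (d + 2*a + 2*b)%nat
  = INR a * (X 2%nat)^(a-1) * psub X X' (d+2)%nat * (Y 2%nat)^b
    + (X 2%nat)^a * (INR b * (Y 2%nat)^(b-1) * psub Y Y' (d+2)%nat).
Proof.
  intros HX HX' HY HY' E2 F2 DX DY a b.
  destruct (pow_diff X X' d HX HX' DX E2 a) as [Xo Xv].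
  destruct (pow_diff Y Y' d HY HY' DY F2 b) as [Yo Yv].
  assert (E : forall i, psub (ps_mul (ps_pow X a) (ps_pow Y b)) (ps_mul (ps_pow X' a) (ps_pow Y' b)) i =
    ps_mul (psub (ps_pow X a) (ps_pow X' a)) (ps_pow Y b) i +
    ps_mul (ps_pow X' a) (psub (ps_pow Y b) (ps_pow Y' b)) i).
  { intros i. unfold psub at 1. apply mul_sub. }
  split.
  - intros i Hi. rewrite E.
    rewrite (mul_ord _ _ (d+2*a) (b*2) Xo (pow_ord _ _ _ HY)) by lia.
    rewrite (mul_ord _ _ (a*2) (d+2*b) (pow_ord _ _ _ HX') Yo) by lia. ring.
  - rewrite E.
    replace (d + 2*a + 2*b)%nat with (d + 2*a + b*2)%nat at 1 by lia.
    rewrite mul_lead by (auto; apply pow_ord; auto).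
    replace (d + 2*a + 2*b)%nat with (a*2 + (d + 2*b))%nat by lia.
    rewrite mul_lead by (auto; apply pow_ord; auto).
    rewrite Xv, Yv, !pow_lead by auto. rewrite <- E2. ring.
Qed.

Lemma padd_ord a b k : ordge a k -> ordge b k -> ordge (padd a b) k.
Proof. intros Ha Hb i Hi. unfold padd. rewrite Ha, Hb by auto. ring. Qed.

Lemma psub_ord a b k : ordge a k -> ordge b k -> ordge (psub a b) k.
Proof. intros Ha Hb i Hi. unfold psub. rewrite Ha, Hb by auto. ring. Qed.

Lemma Qgen A B A' B' d : ordge A 2 -> ordge A' 2 -> ordge B 2 -> ordge B' 2 ->
  ordge (psub A A') (d+2)%nat -> ordge (psub B B') (d+2)%nat ->
  2 * (ps_mul A B (d+6)%nat - ps_mul A' B' (d+6)%nat) =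
  psub A A' (d+2)%nat * padd B B' 4%nat + psub A A' (d+3)%nat * padd B B' 3%nat
  + psub A A' (d+4)%nat * padd B B' 2%nat
  + (padd A A' 2%nat * psub B B' (d+4)%nat + padd A A' 3%nat * psub B B' (d+3)%nat
  + padd A A' 4%nat * psub B B' (d+2)%nat).
Proof.
  intros HA HA' HB HB' DA DB. rewrite mul_symsub.
  replace (d+6)%nat with (d+2+2+2)%nat at 1 by lia.
  rewrite (mul_win3 (psub A A') (padd B B') (d+2) 2) by (auto; apply padd_ord; auto).
  replace (d+6)%nat with (2+(d+2)+2)%nat by lia.
  rewrite (mul_win3 (padd A A') (psub B B') 2 (d+2)) by (auto; apply padd_ord; auto).
  replace (d+2+1)%nat with (d+3)%nat by lia. replace (d+2+2)%nat with (d+4)%nat by lia.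
  reflexivity.
Qed.

Section Constr.
Variables (E : ps -> ps) (c2 Dc : R).
Hypothesis HF1 : forall h, ordge h 2 -> h 2%nat = c2 -> forall N, (N <= 6)%nat -> E h N = 0.
Hypothesis HF2 : forall h h' d, ordge h 2 -> ordge h' 2 -> h 2%nat = c2 -> h' 2%nat = c2 ->
  ordge (psub h h') (d+2)%nat -> E h (d+6)%nat - E h' (d+6)%nat = Dc * (h (d+2)%nat - h' (d+2)%nat).
Hypothesis HDc : Dc <> 0.

Definition base : ps := fun k => if (k =? 2)%nat then c2 else 0.

Fixpoint g (m : nat) : ps :=
  match m with
  | O => base
  | S m' => if (m' <? 3)%nat then g m'
            else fun k => if (k =? m')%nat then g m' m' - E (g m') (m'+4)%nat / Dc else g m' k
  end.

Lemma G2 m k : k <> m -> g (S m) k = g m k.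
Proof.
  intros H. simpl. destruct (m <? 3)%nat; auto.
  destruct (Nat.eqb_spec k m); [lia | auto].
Qed.

Lemma G1 m : g m 0%nat = 0 /\ g m 1%nat = 0 /\ g m 2%nat = c2.
Proof.
  induction m as [|m [I0 [I1 I2]]].
  - unfold g, base. simpl. auto.
  - simpl. destruct (Nat.ltb_spec m 3). auto.
    destruct (Nat.eqb_spec 0 m); [lia|]. destruct (Nat.eqb_spec 1 m); [lia|].
    destruct (Nat.eqb_spec 2 m); [lia|]. auto.
Qed.

Lemma G3 m m' k : (k < m)%nat -> (m <= m')%nat -> g m' k = g m k.
Proof.
  intros Hk Hm. induction m'.
  - assert (m = 0)%nat by lia. subst. reflexivity.
  - destruct (Nat.eq_dec m (S m')). subst; reflexivity.
    rewrite G2 by lia. apply IHm'. lia.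
Qed.

Lemma Gord m : ordge (g m) 2.
Proof. intros i Hi. destruct (G1 m) as [A [B _]]. destruct i as [|[|]]; auto; lia. Qed.

Lemma Gkey m : (3 <= m)%nat -> E (g (S m)) (m+4)%nat = 0.
Proof.
  intros Hm.
  assert (Hs : g (S m) m = g m m - E (g m) (m+4)%nat / Dc).
  { simpl. destruct (Nat.ltb_spec m 3); [lia|]. rewrite Nat.eqb_refl. reflexivity. }
  pose proof (HF2 (g (S m)) (g m) (m-2) (Gord _) (Gord _) (proj2 (proj2 (G1 _)))
      (proj2 (proj2 (G1 _)))) as K.
  replace (m - 2 + 6)%nat with (m+4)%nat in K by lia.
  replace (m - 2 + 2)%nat with m in K by lia.
  assert (Ho : ordge (psub (g (S m)) (g m)) m).
  { intros i Hi. unfold psub. rewrite G2 by lia. ring. }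
  specialize (K Ho). rewrite Hs in K.
  replace (Dc * (g m m - E (g m) (m + 4)%nat / Dc - g m m)) with (- E (g m) (m + 4)%nat) in K
    by (field; auto).
  lra.
Qed.

Lemma construct : exists h1 : ps, h1 0%nat = 0 /\ h1 1%nat = 0 /\ forall n, E h1 n = 0.
Proof.
  set (h1 := fun k => g (S k) k).
  assert (Ag : forall m k, (k < S m)%nat -> h1 k = g (S m) k).
  { intros m k Hk. unfold h1. symmetry. apply G3; lia. }
  assert (H0 : h1 0%nat = 0) by (unfold h1; apply G1).
  assert (H1 : h1 1%nat = 0) by (unfold h1; apply G1).
  assert (H2 : h1 2%nat = c2) by (unfold h1; apply G1).
  assert (Ho : ordge h1 2) by (intros i Hi; destruct i as [|[|]]; auto; lia).
  exists h1. split; auto. split; auto. intros n.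
  destruct (le_lt_dec n 6). apply HF1; auto.
  pose proof (HF2 h1 (g (S (n-4))) (n-6) Ho (Gord _) H2 (proj2 (proj2 (G1 _)))) as K.
  replace (n - 6 + 6)%nat with n in K by lia.
  replace (n - 6 + 2)%nat with (n-4)%nat in K by lia.
  assert (Hq : ordge (psub h1 (g (S (n-4)))) (n-4)%nat).
  { intros i Hi. unfold psub. rewrite (Ag (n-4)%nat i) by lia. ring. }
  specialize (K Hq). rewrite (Ag (n-4)%nat (n-4)%nat) in K by lia.
  pose proof (Gkey (n-4) ltac:(lia)) as G. replace (n-4+4)%nat with n in G by lia.
  rewrite G in K. lra.
Qed.
End Constr.

Lemma cube_root a : exists c, c ^ 3 = a.
Proof.
  destruct (Rtotal_order a 0) as [Hl|[He|Hg]].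
  - exists (- exp (ln (-a) / 3)).
    replace ((- exp (ln (- a) / 3)) ^ 3) with (- (exp (ln (-a)/3) * exp (ln (-a)/3) * exp (ln (-a)/3))) by ring.
    rewrite <- !exp_plus. replace (ln (- a) / 3 + ln (- a) / 3 + ln (- a) / 3) with (ln (-a)) by field.
    rewrite exp_ln by lra. ring.
  - exists 0. subst. ring.
  - exists (exp (ln a / 3)).
    replace ((exp (ln a / 3)) ^ 3) with (exp (ln a/3) * exp (ln a/3) * exp (ln a/3)) by ring.
    rewrite <- !exp_plus. replace (ln a / 3 + ln a / 3 + ln a / 3) with (ln a) by field.
    rewrite exp_ln by lra. ring.
Qed.

Section Main.
Variables (TO : bps) (Om0 : R) (CC : nat -> nat -> R) (KK : nat -> bps)
  (Oxx Oxy Oyy Oxxx Oxxy Oxyy Oyyy : R).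
Hypothesis T00 : TO 0%nat 0%nat = Om0.
Hypothesis T10 : TO 1%nat 0%nat = 0.
Hypothesis T01 : TO 0%nat 1%nat = 0.
Hypothesis T20 : TO 2%nat 0%nat = Oxx / 2.
Hypothesis T11 : TO 1%nat 1%nat = Oxy.
Hypothesis T02 : TO 0%nat 2%nat = Oyy / 2.
Hypothesis T30 : TO 3%nat 0%nat = Oxxx / 6.
Hypothesis T21 : TO 2%nat 1%nat = Oxxy / 2.
Hypothesis T12 : TO 1%nat 2%nat = Oxyy / 2.
Hypothesis T03 : TO 0%nat 3%nat = Oyyy / 6.
Hypothesis C00 : CC 0%nat 0%nat = Oyy.
Hypothesis C10 : CC 1%nat 0%nat = 0.
Hypothesis C20 : CC 2%nat 0%nat = - Oxy.
Hypothesis C30 : CC 3%nat 0%nat = 0.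
Hypothesis C01 : CC 0%nat 1%nat = Oxy.
Hypothesis C11 : CC 1%nat 1%nat = Oyy.
Hypothesis C21 : CC 2%nat 1%nat = 2 - Oxx.
Hypothesis C31 : CC 3%nat 1%nat = - Oxy.
Hypothesis HK00 : forall j, (j <= 3)%nat -> KK j 0%nat 0%nat = 0.
Hypothesis HK010 : KK 0%nat 1%nat 0%nat = 1.
Hypothesis HK001 : KK 0%nat 0%nat 1%nat = 0.
Hypothesis HK110 : KK 1%nat 1%nat 0%nat = 0.
Hypothesis HK101 : KK 1%nat 0%nat 1%nat = 1.
Hypothesis HK210 : KK 2%nat 1%nat 0%nat = 0.
Hypothesis HK201 : KK 2%nat 0%nat 1%nat = 0.
Hypothesis HK310 : KK 3%nat 1%nat 0%nat = 0.
Hypothesis HK301 : KK 3%nat 0%nat 1%nat = 0.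
Hypothesis Hdet : Oxx * Oyy = Oxy ^ 2.
Hypothesis Hyy : Oyy <> 0.

Definition Kh (h : ps) (j : nat) : ps := comp_ps (KK j) h qq.
Definition Vs (h : ps) : nat -> ps := mv_ps CC (Kh h).
Definition En (h : ps) : ps := energy_formal TO Om0 (Vs h).

Lemma HOxx : Oxx = Oxy ^ 2 / Oyy.
Proof. rewrite <- Hdet. field. auto. Qed.

Lemma V_exp h k M : Vs h k M = CC k 0%nat * Kh h 0 M + CC k 1%nat * Kh h 1 M
  + CC k 2%nat * Kh h 2 M + CC k 3%nat * Kh h 3 M.
Proof. unfold Vs, mv_ps. cbn [sum_f_R0]. ring. Qed.

Lemma V_low h k M : ordge h 2 -> (M <= 3)%nat -> Vs h k M = CC k 0%nat * h M + CC k 1%nat * qq M.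
Proof.
  intros Hh HM. rewrite V_exp. unfold Kh. rewrite !Kh_val by auto.
  rewrite !HK00 by lia. rewrite HK010, HK001, HK110, HK101, HK210, HK201, HK310, HK301. ring.
Qed.

Lemma V_ord h k : ordge h 2 -> ordge (Vs h k) 2.
Proof.
  intros Hh i Hi. rewrite V_low by (auto; lia). rewrite Hh by auto.
  unfold qq. destruct i as [|[|]]; simpl; try ring; lia.
Qed.

Lemma V1_ord h : ordge h 2 -> ordge (Vs h 1) 3.
Proof.
  intros Hh i Hi. rewrite V_low by (auto; lia). rewrite C10.
  unfold qq. destruct i as [|[|[|]]]; simpl; try ring; lia.
Qed.

Lemma V3_ord h : ordge h 2 -> ordge (Vs h 3) 3.
Proof.
  intros Hh i Hi. rewrite V_low by (auto; lia). rewrite C30.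
  unfold qq. destruct i as [|[|[|]]]; simpl; try ring; lia.
Qed.

Lemma V2v h k : ordge h 2 -> Vs h k 2%nat = CC k 0%nat * h 2%nat.
Proof. intros. rewrite V_low by (auto; lia). unfold qq; simpl; ring. Qed.

Lemma V3v h k : ordge h 2 -> Vs h k 3%nat = CC k 0%nat * h 3%nat + CC k 1%nat.
Proof. intros. rewrite V_low by (auto; lia). unfold qq; simpl; ring. Qed.

Lemma V_diff h h' d k M : ordge h 2 -> ordge h' 2 -> h 2%nat = h' 2%nat ->
  ordge (psub h h') (d+2)%nat -> (M < d + 4)%nat ->
  Vs h k M - Vs h' k M = CC k 0%nat * (h M - h' M).
Proof.
  intros Hh Hh' H2 Hd HM. rewrite !V_exp. unfold Kh.
  pose proof (Kh_diff (KK 0) h h' d M Hh Hh' H2 Hd HM) as E0.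
  pose proof (Kh_diff (KK 1) h h' d M Hh Hh' H2 Hd HM) as E1.
  pose proof (Kh_diff (KK 2) h h' d M Hh Hh' H2 Hd HM) as E2.
  pose proof (Kh_diff (KK 3) h h' d M Hh Hh' H2 Hd HM) as E3.
  rewrite HK010 in E0. rewrite HK110 in E1. rewrite HK210 in E2. rewrite HK310 in E3.
  lazymatch goal with |- ?a0 + ?a1 + ?a2 + ?a3 - (?b0 + ?b1 + ?b2 + ?b3) = _ =>
    replace (a0 + a1 + a2 + a3 - (b0 + b1 + b2 + b3)) with
      ((a0 - b0) + (a1 - b1) + (a2 - b2) + (a3 - b3)) by ring end.
  rewrite <- !Rmult_minus_distr_l. rewrite E0, E1, E2, E3. ring.
Qed.


Definition Ecal := Oxxx * Oyy ^ 3 - 3 * Oxxy * Oyy ^ 2 * Oxy + 3 * Oxyy * Oyy * Oxy ^ 2 - Oyyy * Oxy ^ 3.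

Lemma comp_diff X Y X' Y' d c dl ep :
  ordge X 2 -> ordge X' 2 -> ordge Y 2 -> ordge Y' 2 ->
  X 2%nat = Oyy * c -> X' 2%nat = Oyy * c -> Y 2%nat = - Oxy * c -> Y' 2%nat = - Oxy * c ->
  ordge (psub X X') (d+2)%nat -> ordge (psub Y Y') (d+2)%nat ->
  psub X X' (d+2)%nat = Oyy * dl -> psub X X' (d+3)%nat = Oyy * ep ->
  psub Y Y' (d+2)%nat = - Oxy * dl -> psub Y Y' (d+3)%nat = - Oxy * ep ->
  comp_ps TO X Y (d+6)%nat - comp_ps TO X' Y' (d+6)%nat = c ^ 2 * Ecal / 2 * dl.
Proof.
  intros HX HX' HY HY' X2 X2' Y2 Y2' DX DY DX2 DX3 DY2 DY3.
  assert (E2 : X 2%nat = X' 2%nat) by congruence.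
  assert (F2 : Y 2%nat = Y' 2%nat) by congruence.
  pose proof (pm_diff X Y X' Y' d HX HX' HY HY' E2 F2 DX DY) as PD.
  rewrite !comp_dsum, dsum_sub.
  rewrite (dsum_ext _ (fun i j => TO i j * psub (ps_mul (ps_pow X i) (ps_pow Y j))
     (ps_mul (ps_pow X' i) (ps_pow Y' j)) (d+6)%nat)) by (intros; unfold psub; ring).
  assert (Z : forall i j, (3 < i+j)%nat -> TO i j * psub (ps_mul (ps_pow X i) (ps_pow Y j))
     (ps_mul (ps_pow X' i) (ps_pow Y' j)) (d+6)%nat = 0).
  { intros i j Hij. destruct (PD i j) as [Ho _]. rewrite Ho by lia. ring. }
  rewrite comp_split; [| exact Z | intros; apply Z; lia].
  destruct (PD 3%nat 0%nat) as [_ V30]. replace (d + 2*3 + 2*0)%nat with (d+6)%nat in V30 by lia.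
  destruct (PD 2%nat 1%nat) as [_ V21]. replace (d + 2*2 + 2*1)%nat with (d+6)%nat in V21 by lia.
  destruct (PD 1%nat 2%nat) as [_ V12]. replace (d + 2*1 + 2*2)%nat with (d+6)%nat in V12 by lia.
  destruct (PD 0%nat 3%nat) as [_ V03]. replace (d + 2*0 + 2*3)%nat with (d+6)%nat in V03 by lia.
  rewrite V30, V21, V12, V03.
  pose proof (Qgen X X X' X' d HX HX' HX HX' DX DX) as Q20.
  pose proof (Qgen X Y X' Y' d HX HX' HY HY' DX DY) as Q11.
  pose proof (Qgen Y Y Y' Y' d HY HY' HY HY' DY DY) as Q02.
  rewrite DX2, DX3, DY2, DY3 in *.
  unfold psub. rewrite !pm00, !pm20, !pm11, !pm02.
  unfold padd in Q20, Q11, Q02.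
  match type of Q20 with 2 * ?L = ?R => assert (H20 : L = R / 2) by (rewrite <- Q20; field) end.
  match type of Q11 with 2 * ?L = ?R => assert (H11 : L = R / 2) by (rewrite <- Q11; field) end.
  match type of Q02 with 2 * ?L = ?R => assert (H02 : L = R / 2) by (rewrite <- Q02; field) end.
  rewrite H20, H11, H02.
  rewrite X2, X2', Y2, Y2'.
  rewrite T00, T10, T01, T20, T11, T02, T30, T21, T12, T03.
  unfold Ecal. rewrite HOxx. cbn [INR Nat.sub pow]. field. auto.
Qed.

Lemma F2 h h' d : ordge h 2 -> ordge h' 2 -> h 2%nat = h' 2%nat -> ordge (psub h h') (d+2)%nat ->
  En h (d+6)%nat - En h' (d+6)%nat = (h 2%nat) ^ 2 * Ecal * (h (d+2)%nat - h' (d+2)%nat).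
Proof.
  intros Hh Hh' H2 Hd. unfold En, energy_formal.
  assert (W : forall k, CC k 0%nat = 0 -> ordge (Vs h k) 3 -> ordge (Vs h' k) 3 ->
     ps_mul (Vs h k) (Vs h k) (d+6)%nat = ps_mul (Vs h' k) (Vs h' k) (d+6)%nat).
  { intros k Ck O1 O2. apply Rminus_diag_uniq. rewrite mul_sub.
    assert (Hd1 : ordge (psub (Vs h k) (Vs h' k)) (d+4)%nat).
    { intros i Hi. unfold psub. rewrite (V_diff h h' d) by auto. rewrite Ck. ring. }
    rewrite (mul_ord _ _ (d+4) 3 Hd1 O1) by lia. rewrite (mul_ord _ _ 3 (d+4) O2 Hd1) by lia. ring. }
  rewrite (W 1%nat C10 (V1_ord h Hh) (V1_ord h' Hh')).
  rewrite (W 3%nat C30 (V3_ord h Hh) (V3_ord h' Hh')).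
  assert (DV : forall k M, (M < d+4)%nat -> psub (Vs h k) (Vs h' k) M = CC k 0%nat * (h M - h' M)).
  { intros k M HM. unfold psub. apply (V_diff h h' d); auto. }
  assert (OV : forall k, ordge (psub (Vs h k) (Vs h' k)) (d+2)%nat).
  { intros k i Hi. rewrite DV by lia. pose proof (Hd i Hi) as Z. unfold psub in Z. rewrite Z. ring. }
  pose proof (comp_diff (Vs h 0) (Vs h 2) (Vs h' 0) (Vs h' 2) d (h 2%nat)
     (h (d+2)%nat - h' (d+2)%nat) (h (d+3)%nat - h' (d+3)%nat)
     (V_ord h 0 Hh) (V_ord h' 0 Hh') (V_ord h 2 Hh) (V_ord h' 2 Hh')) as CD.
  rewrite !V2v in CD by auto. rewrite C00, C20, <- H2 in CD.
  rewrite !DV in CD by lia. rewrite C00, C20 in CD.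
  specialize (CD ltac:(ring) ltac:(ring) ltac:(ring) ltac:(ring) (OV 0%nat) (OV 2%nat)
     ltac:(ring) ltac:(ring) ltac:(ring) ltac:(ring)).
  match type of CD with ?a - ?b = ?v => replace a with (b + v) by (rewrite <- CD; ring) end.
  field.
Qed.

Lemma mz a b u v n : ordge a u -> ordge b v -> (n < u + v)%nat -> ps_mul a b n = 0.
Proof. intros. apply (mul_ord a b u v); auto. Qed.

Lemma pmz p q u v a b n : ordge p u -> ordge q v -> (n < a*u + b*v)%nat ->
  ps_mul (ps_pow p a) (ps_pow q b) n = 0.
Proof. intros. apply (pm_ord p q u v a b); auto. Qed.

Lemma Eexp X Y N : ordge X 2 -> ordge Y 2 -> (N <= 7)%nat ->
  comp_ps TO X Y N = Om0 * ps_one N + Oxx / 2 * ps_mul X X N + Oxy * ps_mul X Y N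
   + Oyy / 2 * ps_mul Y Y N
   + Oxxx / 6 * ps_mul (ps_pow X 3) (ps_pow Y 0) N + Oxxy / 2 * ps_mul (ps_pow X 2) (ps_pow Y 1) N
   + Oxyy / 2 * ps_mul (ps_pow X 1) (ps_pow Y 2) N + Oyyy / 6 * ps_mul (ps_pow X 0) (ps_pow Y 3) N.
Proof.
  intros HX HY HN. rewrite comp_dsum.
  assert (Z : forall i j, (3 < i + j \/ N < i + j)%nat ->
    TO i j * ps_mul (ps_pow X i) (ps_pow Y j) N = 0).
  { intros i j Hij. rewrite (pmz X Y 2 2 i j N HX HY) by lia. ring. }
  rewrite comp_split; [| intros; apply Z; lia | intros; apply Z; lia].
  rewrite pm00, pm10, pm01, pm20, pm11, pm02.
  rewrite T00, T10, T01, T20, T11, T02, T30, T21, T12, T03. ring.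
Qed.

Lemma l4 a b : ordge a 2 -> ordge b 2 -> ps_mul a b 4%nat = a 2%nat * b 2%nat.
Proof. intros. exact (mul_lead a b 2 2 H H0). Qed.
Lemma l5 a b : ordge a 2 -> ordge b 2 -> ps_mul a b 5%nat = a 2%nat * b 3%nat + a 3%nat * b 2%nat.
Proof. intros. change 5%nat with (2+2+1)%nat. rewrite mul_window by auto. cbn. ring. Qed.
Lemma l6 a b : ordge a 2 -> ordge b 2 ->
  ps_mul a b 6%nat = a 2%nat * b 4%nat + a 3%nat * b 3%nat + a 4%nat * b 2%nat.
Proof. intros. change 6%nat with (2+2+2)%nat. rewrite mul_win3 by auto. reflexivity. Qed.
Lemma l33 a b : ordge a 3 -> ordge b 3 -> ps_mul a b 6%nat = a 3%nat * b 3%nat.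
Proof. intros. exact (mul_lead a b 3 3 H H0). Qed.
Lemma p6 p q a b : ordge p 2 -> ordge q 2 -> (a + b = 3)%nat ->
  ps_mul (ps_pow p a) (ps_pow q b) 6%nat = (p 2%nat)^a * (q 2%nat)^b.
Proof. intros. replace 6%nat with (a*2+b*2)%nat by lia. apply pm_lead; auto. Qed.

Definition alpha := -(Oyy^2 + Oxy^2) + Oxx*Oxy^2 + 2*Oxy^2*(2-Oxx) + Oyy*(2-Oxx)^2.

Lemma F1 h : ordge h 2 -> forall N, (N <= 6)%nat ->
  En h N = if (N =? 6)%nat then alpha + Ecal / 3 * (h 2%nat)^3 else 0.
Proof.
  intros Hh N HN. unfold En, energy_formal.
  pose proof (V_ord h 0 Hh) as HX. pose proof (V_ord h 2 Hh) as HY.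
  pose proof (V1_ord h Hh) as H1. pose proof (V3_ord h Hh) as H3.
  rewrite Eexp by (auto; lia).
  Ltac kill HX HY H1 H3 :=
    repeat first [ rewrite (mz _ _ 2 2 _ HX HX) by lia
                 | rewrite (mz _ _ 2 2 _ HX HY) by lia
                 | rewrite (mz _ _ 2 2 _ HY HY) by lia
                 | rewrite (mz _ _ 3 3 _ H1 H1) by lia
                 | rewrite (mz _ _ 3 3 _ H3 H3) by lia
                 | rewrite (pmz _ _ 2 2 3 0 _ HX HY) by lia
                 | rewrite (pmz _ _ 2 2 2 1 _ HX HY) by lia
                 | rewrite (pmz _ _ 2 2 1 2 _ HX HY) by lia
                 | rewrite (pmz _ _ 2 2 0 3 _ HX HY) by lia ].
  destruct N as [|[|[|[|[|[|[|N]]]]]]]; [ | | | | | | | lia];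
    kill HX HY H1 H3; unfold ps_one; cbn [Nat.eqb].
  - ring.
  - ring.
  - ring.
  - ring.
  - rewrite (l4 _ _ HX HX), (l4 _ _ HX HY), (l4 _ _ HY HY).
    rewrite !V2v by auto. rewrite C00, C20. rewrite HOxx. field. auto.
  - rewrite (l5 _ _ HX HX), (l5 _ _ HX HY), (l5 _ _ HY HY).
    rewrite !V2v, !V3v by auto. rewrite C00, C20, C01, C21. rewrite HOxx. field. auto.
  - rewrite (l6 _ _ HX HX), (l6 _ _ HX HY), (l6 _ _ HY HY).
    rewrite (l33 _ _ H1 H1), (l33 _ _ H3 H3).
    rewrite !(p6 _ _ _ _ HX HY) by lia.
    rewrite !V2v, !V3v by auto. rewrite C00, C20, C01, C21, C10, C11, C30, C31.
    unfold alpha, Ecal. rewrite HOxx. field. auto.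
Qed.

Lemma alpha_eq : alpha = Oyy * (4 - Oxx - Oyy).
Proof. unfold alpha. rewrite HOxx. field. auto. Qed.

Lemma main_sec : Oxx + Oyy > 4 -> Ecal <> 0 ->
  exists h1 : ps, h1 0%nat = 0 /\ h1 1%nat = 0 /\ forall n, En h1 n = 0.
Proof.
  intros Hgt HE.
  assert (Ha : alpha <> 0).
  { rewrite alpha_eq. apply Rmult_integral_contrapositive. split; auto. lra. }
  destruct (cube_root (- alpha / (Ecal / 3))) as [c2 Hc].
  assert (Hc2 : c2 <> 0).
  { intros Z. subst c2. simpl in Hc. apply Ha.
    assert (0 = - alpha / (Ecal/3) * (Ecal / 3)) by (rewrite <- Hc; ring).
    replace alpha with (- (- alpha / (Ecal/3) * (Ecal / 3))) by (field; auto). rewrite <- H. ring. }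
  apply (construct En c2 (c2^2 * Ecal)).
  - intros h Ho H2 N HN. rewrite F1 by auto. destruct (N =? 6)%nat; auto.
    rewrite H2, Hc. field. auto.
  - intros h h' d Ho Ho' H2 H2' Hd. rewrite F2 by (auto; congruence). rewrite H2. ring.
  - apply Rmult_integral_contrapositive. split; auto. apply pow_nonzero; auto.
Qed.

End Main.



Theorem lemma2
  (m1 m2 m3 x1 y1 x2 y2 x3 y3 x0 y0 : R)
  (hm : m1 + m2 + m3 = 1) (hm3 : 0 < m3) (hm32 : m3 <= m2) (hm21 : m2 <= m1)
  (hp1 : (x0, y0) <> (x1, y1)) (hp2 : (x0, y0) <> (x2, y2))
  (hp3 : (x0, y0) <> (x3, y3)) :
  let Om := Omega m1 m2 m3 x1 y1 x2 y2 x3 y3 in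
  let Oxx := pd Om 2 0 x0 y0 in
  let Oxy := pd Om 1 1 x0 y0 in
  let Oyy := pd Om 0 2 x0 y0 in
  let C := Cmat Oxx Oxy Oyy in
  pd Om 1 0 x0 y0 = 0 -> pd Om 0 1 x0 y0 = 0 ->
  Oxx * Oyy = Oxy ^ 2 ->
  Oyy <> 0 -> Oxx + Oyy > 4 ->
  forall (Ci : nat -> nat -> R),
  (* Ci is the inverse matrix of C *)
  (forall i k : nat, (i < 4)%nat -> (k < 4)%nat ->
     sum_f_R0 (fun j => Ci i j * C j k) 3 = if Nat.eqb i k then 1 else 0) ->
  forall (K r : nat -> bps),
  (* K_c(x,y) = (x,y) + O(2), K_h = O(2) *)
  K 0%nat 0%nat 0%nat = 0 -> K 0%nat 1%nat 0%nat = 1 -> K 0%nat 0%nat 1%nat = 0 ->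
  K 1%nat 0%nat 0%nat = 0 -> K 1%nat 1%nat 0%nat = 0 -> K 1%nat 0%nat 1%nat = 1 ->
  (forall i n m : nat, (i = 2 \/ i = 3)%nat -> (n + m <= 1)%nat -> K i n m = 0) ->
  (* r(x,y) = (y,0) + O(2) *)
  r 0%nat 0%nat 0%nat = 0 -> r 0%nat 1%nat 0%nat = 0 -> r 0%nat 0%nat 1%nat = 1 ->
  (forall n m : nat, (n + m <= 1)%nat -> r 1%nat n m = 0) ->
  (* DK r = F o K formally, F(x) = C^{-1} f(C x + L_c) *)
  (forall i n m : nat, (i < 4)%nat ->
     bps_add (bps_mul (bps_dx (K i)) (r 0%nat))
             (bps_mul (bps_dy (K i)) (r 1%nat)) n m
     = mv_bps Ci (f_formal (taylor2 (dxfun Om) x0 y0) (taylor2 (dyfun Om) x0 y0)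
                           (mv_bps C K)) i n m) ->
  let Oxxx := pd Om 3 0 x0 y0 in
  let Oxxy := pd Om 2 1 x0 y0 in
  let Oxyy := pd Om 1 2 x0 y0 in
  let Oyyy := pd Om 0 3 x0 y0 in
  Oxxx * Oyy ^ 3 - 3 * Oxxy * Oyy ^ 2 * Oxy + 3 * Oxyy * Oyy * Oxy ^ 2
    - Oyyy * Oxy ^ 3 <> 0 ->
  exists h1 : ps,
    h1 0%nat = 0 /\ h1 1%nat = 0 /\
    let h2 : ps := fun n => if Nat.eqb n 3 then 1 else 0 in
    let Kh : nat -> ps := fun i => comp_ps (K i) h1 h2 in
    forall n : nat,
      energy_formal (taylor2 Om x0 y0) (Om x0 y0) (mv_ps C Kh) n = 0.
Proof.
  intros Om Oxx Oxy Oyy C Hx Hy Hdet Hyy Hgt Ci HCi K r K000 K010 K001 K100 K110 K101 Khyp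
    r000 r010 r001 rhyp Hinv Oxxx Oxxy Oxyy Oyyy HE.
  assert (T00 : taylor2 Om x0 y0 0%nat 0%nat = Om x0 y0).
  { unfold taylor2. replace (INR (fact 0) * INR (fact 0)) with 1 by (simpl; ring).
    unfold pd. simpl. field. }
  assert (T10 : taylor2 Om x0 y0 1%nat 0%nat = 0).
  { unfold taylor2. rewrite Hx. unfold Rdiv. ring. }
  assert (T01 : taylor2 Om x0 y0 0%nat 1%nat = 0).
  { unfold taylor2. rewrite Hy. unfold Rdiv. ring. }
  assert (T20 : taylor2 Om x0 y0 2%nat 0%nat = Oxx / 2).
  { unfold taylor2. replace (INR (fact 2) * INR (fact 0)) with 2 by (simpl; ring). reflexivity. }
  assert (T11 : taylor2 Om x0 y0 1%nat 1%nat = Oxy).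
  { unfold taylor2. replace (INR (fact 1) * INR (fact 1)) with 1 by (simpl; ring).
    unfold Rdiv. rewrite Rinv_1, Rmult_1_r. reflexivity. }
  assert (T02 : taylor2 Om x0 y0 0%nat 2%nat = Oyy / 2).
  { unfold taylor2. replace (INR (fact 0) * INR (fact 2)) with 2 by (simpl; ring). reflexivity. }
  assert (T30 : taylor2 Om x0 y0 3%nat 0%nat = Oxxx / 6).
  { unfold taylor2. replace (INR (fact 3) * INR (fact 0)) with 6 by (simpl; ring). reflexivity. }
  assert (T21 : taylor2 Om x0 y0 2%nat 1%nat = Oxxy / 2).
  { unfold taylor2. replace (INR (fact 2) * INR (fact 1)) with 2 by (simpl; ring). reflexivity. }
  assert (T12 : taylor2 Om x0 y0 1%nat 2%nat = Oxyy / 2).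
  { unfold taylor2. replace (INR (fact 1) * INR (fact 2)) with 2 by (simpl; ring). reflexivity. }
  assert (T03 : taylor2 Om x0 y0 0%nat 3%nat = Oyyy / 6).
  { unfold taylor2. replace (INR (fact 0) * INR (fact 3)) with 6 by (simpl; ring). reflexivity. }
  assert (HK00 : forall j, (j <= 3)%nat -> K j 0%nat 0%nat = 0).
  { intros j Hj. destruct j as [|[|[|[|]]]]; auto; try lia; apply Khyp; simpl; lia. }
  destruct (main_sec (taylor2 Om x0 y0) (Om x0 y0) C K Oxx Oxy Oyy Oxxx Oxxy Oxyy Oyyy
     T00 T10 T01 T20 T11 T02 T30 T21 T12 T03
     eq_refl eq_refl eq_refl eq_refl eq_refl eq_refl eq_refl eq_refl
     HK00 K010 K001 K110 K101
     (Khyp 2%nat 1%nat 0%nat ltac:(auto) ltac:(simpl; lia))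
     (Khyp 2%nat 0%nat 1%nat ltac:(auto) ltac:(simpl; lia))
     (Khyp 3%nat 1%nat 0%nat ltac:(auto) ltac:(simpl; lia))
     (Khyp 3%nat 0%nat 1%nat ltac:(auto) ltac:(simpl; lia))
     Hdet Hyy Hgt HE) as [h1 [A [B Cc]]].
  exists h1. split; [exact A|]. split; [exact B|].
  intros h2 Kh n. exact (Cc n).
Qed.
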